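(* Consider the following model. A principal P and an agent A interact over two periods $t\in\{1,2\}$. States $\omega_t\in\{0,1\}$ satisfy $\Pr[\omega_1=1]=\mu_0\in(0,1)$ and $\Pr[\omega_2=\omega\mid\omega_1=\omega]=\rho\in(1/2,1)$. In each period A chooses $e_t\in\{0,1\}$; if $e_t=1$ he observes $\omega_t$, if $e_t=0$ he observes $\omega_t$ with probability $\pi\in(0,1)$ and nothing otherwise. A then reports $r_t\in\{\varnothing,\omega_t\}$ if he observed $\omega_t$, and $r_t=\varnothing$ otherwise. P chooses $x\in\{0,1\}$ at the end of period 2. Payoffs: P gets $\mathbb{1}[x=\omega_2]-k(e_1+e_2)$, A gets $x-c(e_1+e_2)$, $c,k>0$. A mechanism $m=(\sigma,\hat x)$ consists of $\sigma_1\in\{0,1\}$, $\sigma_2:\{\varnothing,0,1\}\to\{0,1\}$, $\hat x:\{\varnothing,0,1\}^2\to\{0,1\}$; P commits to it, and A best-responds, following the recommendation and disclosing when indifferent. A mechanism is incentive compatible (IC) if (i) at every history occurring with positive probability, A's optimal testing decision equals the recommendation (obedience); (ii) at every such history and after every observed result, A optimally reports the observed result (full disclosure); and (iii) it is forcing: for every $r_1$ with $\sigma_2(r_1)=1$ after which A would report $r_2=\varnothing$, $\hat x(r_1,\varnothing)=0$. Then for any mechanism $m$ there exists an IC mechanism $m'$ that generates the same outcomes (testing decisions, information revealed and assignments) as $m$. *)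

(* Defs.v *)
From HB Require Import structures.
From mathcomp Require Import all_boot all_order all_algebra.
Set Implicit Arguments. Unset Strict Implicit. Unset Printing Implicit Defensive.
Import Order.TTheory GRing.Theory Num.Theory.
Local Open Scope ring_scope.

(* States, testing decisions and assignments are bools (true = 1).
   Reports / observations are [option bool]: [None] = the empty report/observation. *)

Record mech := Mech {
  sig1 : bool;
  sig2 : option bool -> bool;
  xhat : option bool -> option bool -> bool
}.

Section Model.
Variables (R : realFieldType) (mu0 rho pi c : R).

Definition b2R (b : bool) : R := if b then 1 else 0.

Definition obsp (e : bool) : R := if e then 1 else pi.

Definition rep2 (m : mech) (r1 : option bool) (o2 : option bool) : option bool :=
  match o2 with
  | Some w => if b2R (xhat m r1 None) <= b2R (xhat m r1 (Some w)) then Some w else None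
  | None => None
  end.

(* A's belief Pr[omega_2 = 1 | own period-1 observation o1].  If o1 = None then
   A did not test (testing always reveals the state) and the non-observation is
   independent of the state, so the belief on omega_1 is the prior mu0. *)
Definition belief2 (o1 : option bool) : R :=
  match o1 with
  | Some true => rho
  | Some false => 1 - rho
  | None => mu0 * rho + (1 - mu0) * (1 - rho)
  end.

Definition prob2 (o1 : option bool) (w : bool) : R :=
  if w then belief2 o1 else 1 - belief2 o1.

(* A's expected continuation payoff in period 2 from testing decision e2,
   given own observation o1 and report r1 (anticipating optimal reporting). *)
Definition V2 (m : mech) (o1 r1 : option bool) (e2 : bool) : R :=
  prob2 o1 true * (obsp e2 * b2R (xhat m r1 (rep2 m r1 (Some true)))
                   + (1 - obsp e2) * b2R (xhat m r1 None))
  + prob2 o1 false * (obsp e2 * b2R (xhat m r1 (rep2 m r1 (Some false)))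
                   + (1 - obsp e2) * b2R (xhat m r1 None))
  - c * b2R e2.

Definition test2 (m : mech) (o1 r1 : option bool) : bool :=
  if sig2 m r1 then V2 m o1 r1 false <= V2 m o1 r1 true
  else V2 m o1 r1 false < V2 m o1 r1 true.

Definition W2 (m : mech) (o1 r1 : option bool) : R := V2 m o1 r1 (test2 m o1 r1).

Definition rep1 (m : mech) (o1 : option bool) : option bool :=
  match o1 with
  | Some w => if W2 m o1 None <= W2 m o1 (Some w) then Some w else None
  | None => None
  end.

Definition prior1 (w : bool) : R := if w then mu0 else 1 - mu0.

Definition V1 (m : mech) (e1 : bool) : R :=
  prior1 true * (obsp e1 * W2 m (Some true) (rep1 m (Some true))
                 + (1 - obsp e1) * W2 m None None)
  + prior1 false * (obsp e1 * W2 m (Some false) (rep1 m (Some false))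
                 + (1 - obsp e1) * W2 m None None)
  - c * b2R e1.

Definition test1 (m : mech) : bool :=
  if sig1 m then V1 m false <= V1 m true else V1 m false < V1 m true.

(* Outcome along the realization (w1, w2, u1, u2): w_t = omega_t, and u_t = true
   iff the state would be observed in period t without testing (prob. pi).
   Every realization has positive probability. *)
Definition outcome (m : mech) (w1 w2 u1 u2 : bool)
  : bool * option bool * bool * option bool * bool :=
  let e1 := test1 m in
  let o1 := if e1 || u1 then Some w1 else None in
  let r1 := rep1 m o1 in
  let e2 := test2 m o1 r1 in
  let o2 := if e2 || u2 then Some w2 else None in
  let r2 := rep2 m r1 o2 in
  (e1, o1, e2, o2, xhat m r1 r2).

(* Period-1 observation o1 occurs with positive probability. *)
Definition onpath1 (m : mech) (o1 : option bool) : bool :=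
  if o1 is None then ~~ test1 m else true.

Definition obedient (m : mech) : Prop :=
  test1 m = sig1 m /\
  forall o1, onpath1 m o1 -> test2 m o1 (rep1 m o1) = sig2 m (rep1 m o1).

Definition full_disclosure (m : mech) : Prop :=
  (forall w, rep1 m (Some w) = Some w) /\
  (forall o1 w, onpath1 m o1 -> rep2 m (rep1 m o1) (Some w) = Some w).

Definition forcing (m : mech) : Prop :=
  forall r1, sig2 m r1 = true -> xhat m r1 None = false.

Definition IC (m : mech) : Prop := obedient m /\ full_disclosure m /\ forcing m.

End Model.

(* Main.v *)
Require Import Defs.
From mathcomp Require Import all_boot all_order all_algebra ring.
Import Order.TTheory GRing.Theory Num.Theory.
Local Open Scope ring_scope.

Section Proof.
Variables (R : realFieldType) (mu0 rho pi c : R).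
Hypothesis hmu0 : 0 <= mu0 <= 1.
Hypothesis hrho : 0 <= rho <= 1.
Hypothesis hpi : 0 <= pi <= 1.
Variable m : mech.

Definition mp : mech :=
  Mech (test1 mu0 rho pi c m)
       (fun r => test2 mu0 rho pi c m r (rep1 mu0 rho pi c m r))
       (fun r o => let r1 := rep1 mu0 rho pi c m r in
          if o is Some w then xhat m r1 (rep2 R m r1 (Some w))
          else (~~ test2 mu0 rho pi c m r r1) && xhat m r1 None).

Lemma b2R_le (a b : bool) : (b2R R a <= b2R R b) = (a ==> b).
Proof. by case: a; case: b; rewrite /b2R ?lexx ?ler01 //= leNgt ltr01. Qed.

Lemma le10 : ((1:R) <= 0) = false.
Proof. by rewrite leNgt ltr01. Qed.

Lemma b2R_ge0 (a : bool) : 0 <= b2R R a.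
Proof. by case: a; rewrite /b2R ?ler01. Qed.

Lemma rep2_mp r w : rep2 R mp r (Some w) = Some w.
Proof.
rewrite /rep2 /=.
set r1 := rep1 _ _ _ _ _ _.
case: (test2 _ _ _ _ _ _ _); case E1: (xhat m r1 None); case E2: (xhat m r1 (Some w));
  rewrite /b2R /= ?lexx ?ler01 ?le10 /= ?E1 ?E2 /= ?lexx ?ler01 //.
Qed.

Lemma prob2_ge0 o w : 0 <= prob2 mu0 rho o w.
Proof.
case/andP: hmu0 => m0 m1; case/andP: hrho => r0 r1.
case: w; case: o => [[]|] /=; rewrite ?subr_ge0 //.
- by rewrite addr_ge0 // mulr_ge0 // subr_ge0.
- by rewrite lerBlDr lerDl.
- have h : 0 <= mu0 * (1 - rho) + (1 - mu0) * rho
    by rewrite addr_ge0 // mulr_ge0 // subr_ge0.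
  have -> : mu0 * rho + (1 - mu0) * (1 - rho) = 1 - (mu0 * (1 - rho) + (1 - mu0) * rho)
    by ring.
  by rewrite lerBlDr lerDl.
Qed.

Lemma obsp_bnd e : 0 <= 1 - obsp pi e.
Proof. by case: e; rewrite /obsp ?subrr // subr_ge0; case/andP: hpi. Qed.

Lemma V2_mp_le o r e :
  V2 mu0 rho pi c mp o r e <= V2 mu0 rho pi c m o (rep1 mu0 rho pi c m r) e.
Proof.
rewrite /V2 !rep2_mp /=.
apply: lerB => //.
have H : b2R R ((~~ test2 mu0 rho pi c m r (rep1 mu0 rho pi c m r)) &&
          xhat m (rep1 mu0 rho pi c m r) None)
        <= b2R R (xhat m (rep1 mu0 rho pi c m r) None).
  by rewrite b2R_le; case: (~~ _); case: (xhat _ _ _).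
apply: lerD.
  apply: ler_wpM2l; first exact: (prob2_ge0 o true).
  by apply: lerD => //; apply: ler_wpM2l => //; apply: obsp_bnd.
apply: ler_wpM2l; first exact: (prob2_ge0 o false).
by apply: lerD => //; apply: ler_wpM2l => //; apply: obsp_bnd.
Qed.

Lemma V2_mp_eq o r e :
  (~~ test2 mu0 rho pi c m r (rep1 mu0 rho pi c m r)) || e ->
  V2 mu0 rho pi c mp o r e = V2 mu0 rho pi c m o (rep1 mu0 rho pi c m r) e.
Proof.
rewrite /V2 !rep2_mp /=.
case: (test2 _ _ _ _ _ _ _) => /=; last by [].
by move=> -> /=; rewrite /obsp subrr !mul0r.
Qed.

Lemma W2_ge m0 o r e : V2 mu0 rho pi c m0 o r e <= W2 mu0 rho pi c m0 o r.
Proof.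
rewrite /W2 /test2.
set a := V2 mu0 rho pi c m0 o r false; set b := V2 mu0 rho pi c m0 o r true.
case: (sig2 m0 r); case: e.
- by case: (lerP a b) => // h; exact: ltW.
- by case: (lerP a b) => // h; exact: ltW.
- by case: (ltrP a b) => // h; exact: ltW.
- by case: (ltrP a b) => // h; exact: ltW.
Qed.

Lemma test2_mp o :
  test2 mu0 rho pi c mp o o = test2 mu0 rho pi c m o (rep1 mu0 rho pi c m o).
Proof.
case E: (test2 mu0 rho pi c m o (rep1 mu0 rho pi c m o)).
- rewrite /test2 /= E.
  rewrite (V2_mp_eq o o true) ?orbT //.
  apply: (le_trans (V2_mp_le o o false)).
  move: E; rewrite /test2; case: (sig2 _ _) => //; exact: ltW.
- rewrite /test2 /= E !V2_mp_eq ?E //.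
  move: E; rewrite /test2; case: (sig2 _ _) => // /negbT; rewrite -ltNge => h.
  by apply/negbTE; rewrite -leNgt ltW.
Qed.

Lemma W2_mp o :
  W2 mu0 rho pi c mp o o = W2 mu0 rho pi c m o (rep1 mu0 rho pi c m o).
Proof.
rewrite /W2 test2_mp V2_mp_eq //.
by case: (test2 _ _ _ _ _ _ _).
Qed.

Lemma rep1_mp o : rep1 mu0 rho pi c mp o = o.
Proof.
case: o => [w|] //=.
rewrite W2_mp.
case: ifP => // /negbT; rewrite -ltNge => h.
have h1 : W2 mu0 rho pi c mp (Some w) None <= W2 mu0 rho pi c m (Some w) None.
  rewrite {1}/W2.
  apply: le_trans (V2_mp_le _ _ _) _.
  exact: W2_ge.
have h2 : W2 mu0 rho pi c m (Some w) None
          <= W2 mu0 rho pi c m (Some w) (rep1 mu0 rho pi c m (Some w)).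
  rewrite /= ; case: ifP => //.
move: (le_trans h1 h2); rewrite leNgt; by rewrite h.
Qed.

Lemma V1_mp e : V1 mu0 rho pi c mp e = V1 mu0 rho pi c m e.
Proof.
by rewrite /V1 !rep1_mp !W2_mp.
Qed.

Lemma test1_mp : test1 mu0 rho pi c mp = test1 mu0 rho pi c m.
Proof.
rewrite {1}/test1 /= !V1_mp.
case E: (test1 mu0 rho pi c m).
- move: E; rewrite /test1; case: (sig1 m) => //; exact: ltW.
- move: E; rewrite /test1; case: (sig1 m) => // /negbT; rewrite -ltNge => h.
  by apply/negbTE; rewrite -leNgt ltW.
Qed.

Lemma mp_IC : IC mu0 rho pi c mp.
Proof.
split; [split|split; [split|]].
- by rewrite test1_mp.
- by move=> o1 _; rewrite rep1_mp test2_mp.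
- by move=> w; rewrite rep1_mp.
- by move=> o1 w _; rewrite rep1_mp rep2_mp.
- by move=> r1 /= ->.
Qed.

Lemma mp_outcome w1 w2 u1 u2 :
  outcome mu0 rho pi c mp w1 w2 u1 u2 = outcome mu0 rho pi c m w1 w2 u1 u2.
Proof.
rewrite /outcome test1_mp rep1_mp test2_mp.
set o1 := (if _ then _ else _).
set e2 := test2 mu0 rho pi c m o1 _.
case E: (e2 || u2).
- by rewrite rep2_mp.
- move: E => /norP [ne2 _] /=.
  by rewrite -/e2 ne2.
Qed.

End Proof.

Theorem proposition3 (R : realFieldType) (mu0 rho pi c k : R)
  (hmu0 : 0 < mu0 < 1) (hrho : 2^-1 < rho < 1) (hpi : 0 < pi < 1)
  (hc : 0 < c) (hk : 0 < k) (m : mech) :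
  exists m' : mech,
    IC mu0 rho pi c m' /\
    forall w1 w2 u1 u2 : bool,
      outcome mu0 rho pi c m' w1 w2 u1 u2 = outcome mu0 rho pi c m w1 w2 u1 u2.
Proof.
have hm : 0 <= mu0 <= 1 by case/andP: hmu0 => a b; rewrite !ltW.
have hr : 0 <= rho <= 1.
  case/andP: hrho => a b; apply/andP; split; last exact: ltW.
  by apply: le_trans (ltW a); rewrite invr_ge0 ler0n.
have hp : 0 <= pi <= 1 by case/andP: hpi => a b; rewrite !ltW.
exists (mp R mu0 rho pi c m); split.
- exact: (@mp_IC R mu0 rho pi c hm hr hp m).
- exact: (@mp_outcome R mu0 rho pi c hm hr hp m).
Qed.
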